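(* Let $\{(\mathbf{x}^k,\mathbf{y}^k,\boldsymbol{\gamma}^k)\}$ be generated by the two-block linearized ADMM below, applied under the standing assumptions (i)–(iv) below. Then for every $k\ge0$, $$L_\beta(\mathbf{x}^k,\mathbf{y}^k,\boldsymbol{\gamma}^k)-L_\beta(\mathbf{x}^{k+1},\mathbf{y}^k,\boldsymbol{\gamma}^k)\ge C_0\|\mathbf{x}^{k+1}-\mathbf{x}^k\|^2,$$ where $C_0=\frac{L_x-L_g-\beta L_{\mathbf{A}}}{2}$ and $L_{\mathbf{A}}$ is the largest eigenvalue of $\mathbf{A}^{\rm T}\mathbf{A}$.
   Context: Problem: minimize $g(\mathbf{x},\mathbf{y})+f(\mathbf{x})+h(\mathbf{y})$ s.t. $\mathbf{A}\mathbf{x}+\mathbf{B}\mathbf{y}=\mathbf{0}$, $\mathbf{x}\in\mathbb{R}^p$, $\mathbf{y}\in\mathbb{R}^q$, $\mathbf{A}\in\mathbb{R}^{n\times p}$, $\mathbf{B}\in\mathbb{R}^{n\times q}$; $f$ possibly nonconvex nonsmooth. Standing assumptions: (i) $\nabla h$ is $L_h$-Lipschitz; (ii) $\nabla g$ is $L_g$-Lipschitz; (iii) $g+f+h$ is lower bounded on the feasible set $\{\mathbf{A}\mathbf{x}+\mathbf{B}\mathbf{y}=\mathbf{0}\}$ and coercive w.r.t. $\mathbf{y}$ over it; (iv) $\mathbf{B}$ has full column rank and $\mathrm{Im}(\mathbf{A})\subset\mathrm{Im}(\mathbf{B})$. $L_\beta(\mathbf{x},\mathbf{y},\boldsymbol{\gamma})=g(\mathbf{x},\mathbf{y})+f(\mathbf{x})+h(\mathbf{y})+\langle\boldsymbol{\gamma},\mathbf{A}\mathbf{x}+\mathbf{B}\mathbf{y}\rangle+\frac{\beta}{2}\|\mathbf{A}\mathbf{x}+\mathbf{B}\mathbf{y}\|^2$.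 Algorithm (parameters $L_x,L_y,\beta>0$): $\mathbf{x}^{k+1}\in\arg\min\bar f^k$, $\mathbf{y}^{k+1}=\arg\min\bar h^k$, $\boldsymbol{\gamma}^{k+1}=\boldsymbol{\gamma}^k+\beta(\mathbf{A}\mathbf{x}^{k+1}+\mathbf{B}\mathbf{y}^{k+1})$, where $\bar f^k(\mathbf{x})=f(\mathbf{x})+\langle\boldsymbol{\gamma}^k,\mathbf{A}\mathbf{x}\rangle+\frac{L_x}{2}\|\mathbf{x}-\mathbf{x}^k\|^2+\langle\mathbf{x}-\mathbf{x}^k,\nabla_{\mathbf{x}}g(\mathbf{x}^k,\mathbf{y}^k)+\beta\mathbf{A}^{\rm T}(\mathbf{A}\mathbf{x}^k+\mathbf{B}\mathbf{y}^k)\rangle$, $\bar h^k(\mathbf{y})=\langle\boldsymbol{\gamma}^k,\mathbf{B}\mathbf{y}\rangle+\frac{L_y}{2}\|\mathbf{y}-\mathbf{y}^k\|^2+\frac{\beta}{2}\|\mathbf{A}\mathbf{x}^{k+1}+\mathbf{B}\mathbf{y}\|^2+\langle\mathbf{y}-\mathbf{y}^k,\nabla_{\mathbf{y}}g(\mathbf{x}^{k+1},\mathbf{y}^k)+\nabla h(\mathbf{y}^k)\rangle$. *)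

(* Defs.v *)
From HB Require Import structures.
From mathcomp Require Import all_boot all_order all_algebra.
From mathcomp Require Import all_classical all_reals all_analysis.
Set Implicit Arguments. Unset Strict Implicit. Unset Printing Implicit Defensive.
Import Order.TTheory GRing.Theory Num.Theory.
Import numFieldNormedType.Exports.
Local Open Scope ring_scope.

Definition dotv (R : realType) (n : nat) (u v : 'cV[R]_n) : R := (u^T *m v) 0 0.

Definition enorm (R : realType) (n : nat) (v : 'cV[R]_n) : R := Num.sqrt (dotv v v).

Definition is_gradient (R : realType) (n : nat) (f : 'cV[R]_n -> R)
  (G : 'cV[R]_n -> 'cV[R]_n) : Prop :=
  forall x, differentiable f x /\ forall h, 'd f x h = dotv (G x) h.

Definition lipschitz_map (R : realType) (n m : nat) (G : 'cV[R]_n -> 'cV[R]_m)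
  (L : R) : Prop :=
  forall u v, enorm (G u - G v) <= L * enorm (u - v).

Definition largest_eigenvalue (R : realType) (n : nat) (M : 'M[R]_n) (L : R) : Prop :=
  eigenvalue M L /\ forall mu, eigenvalue M mu -> mu <= L.

Definition aug_lag (R : realType) (n p q : nat)
  (g : 'cV[R]_(p + q) -> R) (f : 'cV[R]_p -> R) (h : 'cV[R]_q -> R)
  (A : 'M[R]_(n, p)) (B : 'M[R]_(n, q)) (beta : R)
  (x : 'cV[R]_p) (y : 'cV[R]_q) (gam : 'cV[R]_n) : R :=
  g (col_mx x y) + f x + h y + dotv gam (A *m x + B *m y)
  + beta / 2 * (enorm (A *m x + B *m y)) ^+ 2.

Definition grad_x (R : realType) (p q : nat) (Gg : 'cV[R]_(p + q) -> 'cV[R]_(p + q))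
  (x : 'cV[R]_p) (y : 'cV[R]_q) : 'cV[R]_p := usubmx (Gg (col_mx x y)).
Definition grad_y (R : realType) (p q : nat) (Gg : 'cV[R]_(p + q) -> 'cV[R]_(p + q))
  (x : 'cV[R]_p) (y : 'cV[R]_q) : 'cV[R]_q := dsubmx (Gg (col_mx x y)).

Definition fbar (R : realType) (n p q : nat) (Gg : 'cV[R]_(p + q) -> 'cV[R]_(p + q))
  (f : 'cV[R]_p -> R) (A : 'M[R]_(n, p)) (B : 'M[R]_(n, q)) (beta Lx : R)
  (xk : 'cV[R]_p) (yk : 'cV[R]_q) (gk : 'cV[R]_n) (x : 'cV[R]_p) : R :=
  f x + dotv gk (A *m x) + Lx / 2 * (enorm (x - xk)) ^+ 2
  + dotv (x - xk) (grad_x Gg xk yk + beta *: (A^T *m (A *m xk + B *m yk))).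

Definition hbar (R : realType) (n p q : nat) (Gg : 'cV[R]_(p + q) -> 'cV[R]_(p + q))
  (Gh : 'cV[R]_q -> 'cV[R]_q) (A : 'M[R]_(n, p)) (B : 'M[R]_(n, q)) (beta Ly : R)
  (x1 : 'cV[R]_p) (yk : 'cV[R]_q) (gk : 'cV[R]_n) (y : 'cV[R]_q) : R :=
  dotv gk (B *m y) + Ly / 2 * (enorm (y - yk)) ^+ 2
  + beta / 2 * (enorm (A *m x1 + B *m y)) ^+ 2
  + dotv (y - yk) (grad_y Gg x1 yk + Gh yk).

(* Main.v *)
Require Import Defs.
From HB Require Import structures.
From mathcomp Require Import all_boot all_order all_algebra.
From mathcomp Require Import all_classical all_reals all_analysis.
From mathcomp Require Import ring lra.
Import Order.TTheory GRing.Theory Num.Theory.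
Import numFieldNormedType.Exports.
Local Open Scope ring_scope.
Set Implicit Arguments. Unset Strict Implicit.

Lemma mulr_ge0_sq (R : realDomainType) (x : R) : 0 <= x * x.
Proof. by rewrite -expr2 sqr_ge0. Qed.

Section Dot.
Variable R : realType.
Variable N : nat.
Implicit Types u v w : 'cV[R]_N.

Lemma dotvE u v : dotv u v = \sum_i u i 0 * v i 0.
Proof. by rewrite /dotv mxE; apply: eq_bigr => i _; rewrite mxE. Qed.

Lemma dotvC u v : dotv u v = dotv v u.
Proof. by rewrite !dotvE; apply: eq_bigr => i _; rewrite mulrC. Qed.

Lemma dotvDl u v w : dotv (u + v) w = dotv u w + dotv v w.
Proof. by rewrite !dotvE -big_split; apply: eq_bigr => i _; rewrite mxE mulrDl. Qed.

Lemma dotvDr u v w : dotv w (u + v) = dotv w u + dotv w v.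
Proof. by rewrite dotvC dotvDl !(dotvC w). Qed.

Lemma dotvZl a u v : dotv (a *: u) v = a * dotv u v.
Proof. by rewrite !dotvE mulr_sumr; apply: eq_bigr => i _; rewrite mxE mulrA. Qed.

Lemma dotvZr a u v : dotv v (a *: u) = a * dotv v u.
Proof. by rewrite dotvC dotvZl dotvC. Qed.

Lemma dotvNl u v : dotv (- u) v = - dotv u v.
Proof. by rewrite -scaleN1r dotvZl mulN1r. Qed.

Lemma dotvNr u v : dotv v (- u) = - dotv v u.
Proof. by rewrite dotvC dotvNl dotvC. Qed.

Lemma dotvBl u v w : dotv (u - v) w = dotv u w - dotv v w.
Proof. by rewrite dotvDl dotvNl. Qed.

Lemma dotvBr u v w : dotv w (u - v) = dotv w u - dotv w v.
Proof. by rewrite dotvDr dotvNr. Qed.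

Lemma dotv0l v : dotv 0 v = 0.
Proof. by rewrite dotvE big1 // => i _; rewrite mxE mul0r. Qed.

Lemma dotv0r v : dotv v 0 = 0.
Proof. by rewrite dotvC dotv0l. Qed.

Lemma dotv_ge0 u : 0 <= dotv u u.
Proof. by rewrite dotvE sumr_ge0 // => i _; rewrite mulr_ge0_sq. Qed.

Lemma dotv_eq0 u : dotv u u = 0 -> u = 0.
Proof.
rewrite dotvE => /eqP; rewrite psumr_eq0; last by move=> i _; rewrite mulr_ge0_sq.
move=> /allP H; apply/matrixP => i j; rewrite (ord1 j) mxE.
have := H i (mem_index_enum i); rewrite mulf_eq0 orbb => /eqP //.
Qed.

Lemma enorm_sq u : enorm u ^+ 2 = dotv u u.
Proof. by rewrite /enorm sqr_sqrtr // dotv_ge0. Qed.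

Lemma enorm_ge0 u : 0 <= enorm u.
Proof. exact: sqrtr_ge0. Qed.

Lemma dotv_CS u v : dotv u v <= enorm u * enorm v.
Proof.
have key : forall s, 0 <= dotv u u - 2 * s * dotv u v + s ^+ 2 * dotv v v.
  move=> s; have := dotv_ge0 (u - s *: v).
  rewrite !dotvBl !dotvBr !dotvZl !dotvZr (dotvC v u); lra.
suff : dotv u v ^+ 2 <= dotv u u * dotv v v.
  move=> H; rewrite /enorm -sqrtrM ?dotv_ge0 //.
  apply: le_trans (ler_norm _) _.
  by rewrite -sqrtr_sqr; apply: ler_wsqrtr.
set a := dotv u u; set b := dotv v v; set c := dotv u v.
have a0 : 0 <= a by apply: dotv_ge0.
have [b0|bpos] := eqVneq b 0.
  have c0 : c = 0.
    apply/eqP; apply/negPn/negP => c0.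
    have := key ((a + 1) / (2 * c)).
    have -> : 2 * ((a + 1) / (2 * c)) * c = a + 1 by field; rewrite c0.
    rewrite -/b b0 mulr0 addr0 -/a; lra.
  by rewrite c0 b0 mulr0 expr0n.
have bp : 0 < b by rewrite lt_def bpos dotv_ge0.
have := key (c / b); rewrite -/a -/b -/c.
have -> : a - 2 * (c / b) * c + (c / b) ^+ 2 * b = (a * b - c ^+ 2) / b.
  by field; rewrite gt_eqF.
move=> H; have := mulr_ge0 H (ltW bp); rewrite divfK ?gt_eqF //; lra.
Qed.

Lemma enormZ a u : 0 <= a -> enorm (a *: u) = a * enorm u.
Proof.
move=> a0; rewrite /enorm dotvZl dotvZr mulrA sqrtrM ?mulr_ge0_sq //.
by rewrite -expr2 sqrtr_sqr ger0_norm.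
Qed.

End Dot.

Lemma descent (R : realType) N (g : 'cV[R]_N -> R) G L :
  is_gradient g G -> lipschitz_map G L ->
  forall z w, g (z + w) - g z - dotv (G z) w <= L / 2 * dotv w w.
Proof.
move=> hg hL z w.
pose phi t := g (z + t *: w).
have dphi (t : R) : is_derive t (1 : R) phi (dotv (G (z + t *: w)) w).
  have [dg dG] := hg (z + t *: w).
  have E : (fun h : R => h^-1 *: ((phi \o shift t) (h *: 1) - phi t)) =
     (fun h : R => h^-1 *: ((g \o shift (z + t *: w)) (h *: w) - g (z + t *: w))).
    apply/funext => h /=; rewrite /phi /shift.
    congr (_ *: (g _ - _)).
    by rewrite [h *: 1]mulr1 scalerDl addrCA.
  apply: DeriveDef.
    by rewrite /derivable E; exact: (diff_derivable (v := w) dg).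
  by rewrite /derive E -/(derive g _ w) deriveE // dG.
pose K := L / 2 * dotv w w; pose c0 := dotv (G z) w.
have dq (t : R) : is_derive t (1:R) (c0 \*: (@id R) + K \*: ((@id R) * (@id R)))
     (c0 *: 1 + K *: (t *: 1 + t *: 1)).
  have H2 : is_derive t (1:R) ((@id R) * (@id R)) (t *: 1 + t *: 1).
    exact: is_deriveM.
  by apply: is_deriveD.
have tA : forall s : R, s%:A = s by move=> s; exact: mulr1.
pose psi := phi - (c0 \*: (@id R) + K \*: ((@id R) * (@id R))).
have dpsi (t : R) := is_deriveB (dphi t) (dq t).
have key : psi 1 <= psi 0.
  apply: (@ler0_derive1_nincr _ psi 0 1).
  - by move=> t _; exact: ex_derive.
  - move=> t; rewrite in_itv /= => /andP [t0 t1].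
    rewrite derive1E derive_val.
    rewrite !tA.
    have h1 := dotv_CS (G (z + t *: w) - G z) w.
    have h2 := hL (z + t *: w) z.
    have ee : z + t *: w - z = t *: w by rewrite addrAC subrr add0r.
    rewrite ee enormZ ?(ltW t0) // in h2.
    have h3 := ler_wpM2r (enorm_ge0 w) h2.
    rewrite dotvBl in h1.
    have h4 : L * (t * enorm w) * enorm w = L * t * dotv w w.
      by rewrite -enorm_sq; ring.
    have sM : forall a b : R, a *: b = a * b by [].
    rewrite /K /c0 sM; rewrite h4 in h3; lra.
  - by apply: derivable_within_continuous => t _; exact: ex_derive.
  - by [].
  - by [].
  - by [].
move: key; rewrite /psi /phi !fctE /= !tA scale1r scale0r addr0.
have sM : forall a b : R, a *: b = a * b by [].
rewrite !sM /c0 /K; lra.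
Qed.

Lemma cont_sum (R : realType) (T : topologicalType) n (F : 'I_n -> T -> R) :
  (forall i, continuous (F i)) -> continuous (fun x => \sum_(i < n) F i x).
Proof.
move=> H x; apply: cvg_big => //.
  exact: add_continuous.
by move=> i _; exact: H.
Qed.

Section Ray.
Variable R : realType.
Variable p : nat.
Implicit Types (M : 'M[R]_p) (u v w : 'rV[R]_p).

Definition bf M u w := (u *m M *m w^T) 0 0.

Lemma bfE M u w : bf M u w = \sum_j (\sum_i u 0 i * M i j) * w 0 j.
Proof. by rewrite /bf mxE; apply: eq_bigr => j _; rewrite !mxE. Qed.

Lemma bfDl M u v w : bf M (u + v) w = bf M u w + bf M v w.
Proof. by rewrite /bf !mulmxDl mxE. Qed.

Lemma bfDr M u v w : bf M w (u + v) = bf M w u + bf M w v.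
Proof. by rewrite /bf linearD /= mulmxDr mxE. Qed.

Lemma bfZl a M u w : bf M (a *: u) w = a * bf M u w.
Proof. by rewrite /bf -!scalemxAl mxE. Qed.

Lemma bfZr a M u w : bf M w (a *: u) = a * bf M w u.
Proof. by rewrite /bf linearZ /= -scalemxAr mxE. Qed.

Lemma bfBM M1 M2 u w : bf (M1 - M2) u w = bf M1 u w - bf M2 u w.
Proof. by rewrite /bf mulmxBr mulmxBl !mxE. Qed.

Lemma bf_scalar c u w : bf c%:M u w = c * bf 1%:M u w.
Proof. by rewrite /bf mul_mx_scalar mulmx1 -scalemxAl mxE. Qed.

Lemma bfT M u w : bf M u w = bf M^T w u.
Proof.
rewrite /bf; have -> : forall X : 'M[R]_1, X 0 0 = X^T 0 0 by move=> X; rewrite mxE.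
by rewrite !trmx_mul trmxK mulmxA.
Qed.

Lemma bf0 M : bf M 0 0 = 0.
Proof. by rewrite /bf !mul0mx mxE. Qed.

Lemma bf1E u : bf 1%:M u u = \sum_j u 0 j * u 0 j.
Proof. by rewrite /bf mulmx1 mxE; apply: eq_bigr => j _; rewrite mxE. Qed.

Lemma bf1_ge0 u : 0 <= bf 1%:M u u.
Proof. by rewrite bf1E sumr_ge0 // => i _; rewrite mulr_ge0_sq. Qed.

Lemma bf1_eq0 u : bf 1%:M u u = 0 -> u = 0.
Proof.
rewrite bf1E => /eqP; rewrite psumr_eq0; last by move=> i _; rewrite mulr_ge0_sq.
move=> /allP H; apply/matrixP => i j; rewrite (ord1 i) mxE.
have := H j (mem_index_enum j); rewrite mulf_eq0 orbb => /eqP //.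
Qed.

Lemma bf_cont M : continuous (fun v => bf M v v).
Proof.
have -> : (fun v => bf M v v) = (fun v => \sum_j (\sum_i v 0 i * M i j) * v 0 j).
  by apply/funext => v; rewrite bfE.
apply: cont_sum => j; move=> x; apply: continuousM; last exact: coord_continuous.
apply: cont_sum => i; move=> y; apply: continuousM; last exact: cst_continuous.
exact: coord_continuous.
Qed.

End Ray.

Lemma rayleigh (R : realType) p (M : 'M[R]_p) LA :
  M^T = M -> largest_eigenvalue M LA ->
  forall u, bf M u u <= LA * bf 1%:M u u.
Proof.
move=> MT [eigLA maxLA] u.
have [->|u0] := eqVneq u 0; first by rewrite !bf0 mulr0.
pose S := [set v : 'rV[R]_p | bf 1%:M v v = 1]%classic.
have normS : forall w, w != 0 -> S ((Num.sqrt (bf 1%:M w w))^-1 *: w) /\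
    forall N, bf N ((Num.sqrt (bf 1%:M w w))^-1 *: w) ((Num.sqrt (bf 1%:M w w))^-1 *: w)
       = bf N w w / bf 1%:M w w.
  move=> w w0.
  have bp : 0 < bf 1%:M w w.
    rewrite lt_def bf1_ge0 andbT; apply/eqP => /bf1_eq0 h; by rewrite h eqxx in w0.
  have e : forall N, bf N ((Num.sqrt (bf 1%:M w w))^-1 *: w) ((Num.sqrt (bf 1%:M w w))^-1 *: w)
       = bf N w w / bf 1%:M w w.
    move=> N; rewrite bfZl bfZr mulrA -invfM -expr2 sqr_sqrtr ?(ltW bp) //.
    by rewrite mulrC.
  split => //; rewrite /S /= e divff // gt_eqF //.
have Sne : (S !=set0)%classic by exists ((Num.sqrt (bf 1%:M u u))^-1 *: u); exact: (normS u u0).1.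
have bS : bounded_set S.
  exists 1; split; first by rewrite num_real.
  move=> K K1 v Sv.
  rewrite /Num.norm /= mx_normrE; apply: bigmax_le; first by lra.
  move=> [i j] _ /=; rewrite (ord1 i).
  have h : v 0 j * v 0 j <= 1.
    rewrite -Sv bf1E (bigD1 j) //= lerDl sumr_ge0 // => k _; exact: mulr_ge0_sq.
  have h2 : `|v 0 j| * `|v 0 j| <= 1 by rewrite -normrM ger0_norm ?mulr_ge0_sq.
  have := normr_ge0 (v 0 j); nra.
have clS : closed S.
  have h : closed [set x : R | x = 1]%classic by apply: closed_eq.
  exact: ((continuous_closedP _).1 (@bf_cont R p 1%:M) _ h).
have cS : compact S := bounded_closed_compact bS clS.
have [v vS vmax] := compact_EVT_max Sne cS (continuous_subspaceT (@bf_cont R p M)).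
pose c : R := bf M v v.
have vS' : bf 1%:M v v = 1 by move: vS; rewrite inE.
have H1 : forall w, bf M w w <= c * bf 1%:M w w.
  move=> w; have [->|w0] := eqVneq w 0; first by rewrite !bf0 mulr0.
  have bp : 0 < bf 1%:M w w.
    rewrite lt_def bf1_ge0 andbT; apply/eqP => /bf1_eq0 h; by rewrite h eqxx in w0.
  have [Sw ew] := normS w w0.
  have := vmax _ (mem_set Sw); rewrite ew -/c ler_pdivrMr //.
pose P := c%:M - M.
have Ppsd : forall w, 0 <= bf P w w.
  by move=> w; rewrite bfBM bf_scalar; have := H1 w; lra.
have Pv : bf P v v = 0 by rewrite bfBM bf_scalar vS' mulr1 subrr.
have PT : P^T = P by rewrite /P linearB /= tr_scalar_mx MT.
have Pw : forall w, bf P w v = 0.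
  move=> w; set b := bf P w v; set e := bf P w w.
  have key : forall t : R, 0 <= 2 * t * b + t ^+ 2 * e.
    move=> t; have := Ppsd (v + t *: w).
    rewrite !bfDl !bfDr !bfZl !bfZr Pv (bfT P v w) PT -/b -/e; lra.
  have e0 : 0 <= e := Ppsd w.
  have := key (- b / (e + 1)).
  have -> : 2 * (- b / (e + 1)) * b + (- b / (e + 1)) ^+ 2 * e
      = - (b * b * (e + 2)) / (e + 1) ^+ 2.
    by field; rewrite gt_eqF //; lra.
  move=> h.
  have h' := mulr_ge0 h (sqr_ge0 (e + 1)).
  rewrite divfK in h'; last by rewrite expf_neq0 // gt_eqF //; lra.
  have hb : b * b <= 0 by nra.
  have : b * b = 0 by apply/le_anti; rewrite hb mulr_ge0_sq.
  by move/eqP; rewrite mulf_eq0 orbb => /eqP.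
have vP0 : v *m P = 0.
  apply: bf1_eq0; have := Pw (v *m P).
  by rewrite /bf mulmx1 trmx_mul PT mulmxA.
have eigc : eigenvalue M c.
  apply/eigenvalueP; exists v.
    by move: vP0; rewrite /P mulmxBr mul_mx_scalar => /eqP; rewrite subr_eq0 => /eqP.
  by apply/eqP => v0; move: vS'; rewrite v0 bf0 => /eqP; rewrite eq_sym oner_eq0.
have cLA := maxLA c eigc.
apply: le_trans (H1 u) _.
by apply: ler_wpM2r => //; exact: bf1_ge0.
Qed.

Lemma dotv_mulmx (R : realType) m n (A : 'M[R]_(m, n)) (u : 'cV[R]_n) (v : 'cV[R]_m) :
  dotv (A *m u) v = dotv u (A^T *m v).
Proof. by rewrite /dotv trmx_mul mulmxA. Qed.

Lemma dotv_col (R : realType) m n (a c : 'cV[R]_m) (b d : 'cV[R]_n) :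
  dotv (col_mx a b) (col_mx c d) = dotv a c + dotv b d.
Proof. by rewrite /dotv tr_col_mx mul_row_col mxE. Qed.

Lemma rayleigh_cv (R : realType) n p (A : 'M[R]_(n, p)) LA :
  largest_eigenvalue (A^T *m A) LA ->
  forall d : 'cV[R]_p, dotv (A *m d) (A *m d) <= LA * dotv d d.
Proof.
move=> hLA d.
have MT : (A^T *m A)^T = A^T *m A by rewrite trmx_mul trmxK.
have := rayleigh MT hLA d^T.
have -> : bf (A^T *m A) d^T d^T = dotv (A *m d) (A *m d).
  by rewrite /bf /dotv trmxK trmx_mul !mulmxA.
by rewrite /bf mulmx1 trmxK.
Qed.

Unset Implicit Arguments. Set Strict Implicit.

Theorem lemma5 (R : realType) (n p q : nat)
  (g : 'cV[R]_(p + q) -> R) (Gg : 'cV[R]_(p + q) -> 'cV[R]_(p + q))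
  (f : 'cV[R]_p -> R) (h : 'cV[R]_q -> R) (Gh : 'cV[R]_q -> 'cV[R]_q)
  (A : 'M[R]_(n, p)) (B : 'M[R]_(n, q))
  (Lg Lh Lx Ly beta LA : R)
  (x : nat -> 'cV[R]_p) (y : nat -> 'cV[R]_q) (gam : nat -> 'cV[R]_n) :
  (* (i) grad h is Lh-Lipschitz *)
  is_gradient h Gh -> lipschitz_map Gh Lh ->
  (* (ii) grad g is Lg-Lipschitz *)
  is_gradient g Gg -> lipschitz_map Gg Lg ->
  (* (iii) lower bounded and coercive in y on the feasible set *)
  (exists m : R, forall (u : 'cV[R]_p) (v : 'cV[R]_q), A *m u + B *m v = 0 ->
      m <= g (col_mx u v) + f u + h v) ->
  (forall M : R, exists r : R, forall (u : 'cV[R]_p) (v : 'cV[R]_q),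
      A *m u + B *m v = 0 -> r < enorm v -> M < g (col_mx u v) + f u + h v) ->
  (* (iv) B has full column rank and Im A is contained in Im B *)
  \rank B = q ->
  (forall u : 'cV[R]_p, exists v : 'cV[R]_q, A *m u = B *m v) ->
  (* parameters *)
  0 < Lx -> 0 < Ly -> 0 < beta ->
  largest_eigenvalue (A^T *m A) LA ->
  (* the algorithm *)
  (forall k (u : 'cV[R]_p),
      fbar Gg f A B beta Lx (x k) (y k) (gam k) (x k.+1)
      <= fbar Gg f A B beta Lx (x k) (y k) (gam k) u) ->
  (forall k (v : 'cV[R]_q),
      hbar Gg Gh A B beta Ly (x k.+1) (y k) (gam k) (y k.+1)
      <= hbar Gg Gh A B beta Ly (x k.+1) (y k) (gam k) v) ->
  (forall k, gam k.+1 = gam k + beta *: (A *m x k.+1 + B *m y k.+1)) ->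
  forall k : nat,
    aug_lag g f h A B beta (x k) (y k) (gam k)
    - aug_lag g f h A B beta (x k.+1) (y k) (gam k)
    >= (Lx - Lg - beta * LA) / 2 * (enorm (x k.+1 - x k)) ^+ 2.
Proof.
move=> hgh hLh hg hLg _ _ _ _ Lx0 Ly0 b0 hLA hx _ _ k.
set xk := x k; set x1 := x k.+1; set yk := y k; set gk := gam k.
have hf := hx k xk; rewrite -/xk -/x1 -/yk -/gk in hf.
set d := x1 - xk.
have hd := descent hg hLg (col_mx xk yk) (col_mx d 0).
rewrite add_col_mx addr0 /d addrCA subrr addr0 -/d in hd.
rewrite -[Gg (col_mx xk yk)]vsubmxK !dotv_col dotv0r dotv0l !addr0 in hd.
have hR := rayleigh_cv hLA d.
have hR' := ler_wpM2l (ltW b0) hR.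
set r := A *m xk + B *m yk.
have eA1 : A *m x1 = A *m xk + A *m d by rewrite /d mulmxBr addrCA subrr addr0.
have eA : A *m x1 + B *m yk = r + A *m d.
  by rewrite eA1 /r addrAC.
move: hf; rewrite /fbar subrr /aug_lag eA eA1 -/r -/d.
rewrite -/d in hR hR' hd.
clearbody d r.
rewrite !enorm_sq !dotv0l !dotvDr !dotvDl dotvZr -dotv_mulmx (dotvC r (A *m d)).
rewrite /grad_x.
move=> hf.
rewrite (dotvC (usubmx _) d) in hd. lra.
Qed.
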